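(* Let $r_1,r_2>0$ and $g,h\in\Gamma_0(\mathbb{R}^n)$. Then $e_{r_1}g+e_{r_2}h=e_{r_1+r_2}f$ for some $f\in\Gamma_0(\mathbb{R}^n)$; specifically, $$f(x)=\sup_{v\in\mathbb{R}^n}\Big\{\big[e_{r_1}g(x+v)-r_1q(v)\big]+\big[e_{r_2}h(x+v)-r_2q(v)\big]\Big\}.$$
   Context: $\Gamma_0(\mathbb{R}^n)$ is the set of proper convex lsc functions on $\mathbb{R}^n$; $e_rg(x)=\inf_y\{g(y)+\frac r2\|y-x\|^2\}$; $q=\frac12\|\cdot\|^2$. *)

(* Defs.v *)
From HB Require Import structures.
From mathcomp Require Import all_boot all_order all_algebra.
From mathcomp Require Import all_classical all_reals all_analysis.
Import numFieldNormedType.Exports.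
Set Implicit Arguments. Unset Strict Implicit. Unset Printing Implicit Defensive.
Import Order.TTheory GRing.Theory Num.Theory.
Local Open Scope ring_scope.
Local Open Scope classical_set_scope.

Section Defs.
Context {R : realType} {n : nat}.
Implicit Types (f : 'rV[R]_n -> \bar R) (x y : 'rV[R]_n).

Definition q (v : 'rV[R]_n) : R := (\sum_(i < n) v ord0 i ^+ 2) / 2.

Definition proper_fun f : Prop :=
  (forall x, f x != -oo%E) /\ (exists x, f x != +oo%E).

(* convexity of an extended-real-valued function (epigraph is convex) *)
Definition convex_efun f : Prop :=
  forall x y (a b t : R), (f x <= a%:E)%E -> (f y <= b%:E)%E ->
    0 <= t <= 1 ->
    (f (t *: x + (1 - t) *: y)%R <= (t * a + (1 - t) * b)%R%:E)%E.

Definition Gamma0 f : Prop :=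
  [/\ proper_fun f, convex_efun f & lower_semicontinuous f].

Definition menv (r : R) f (x : 'rV[R]_n) : \bar R :=
  ereal_inf [set (f y + (r * q (y - x)%R)%R%:E)%E | y in [set: 'rV[R]_n]].

End Defs.

(* Main.v *)
Require Import Defs.
From HB Require Import structures.
From mathcomp Require Import all_boot all_order all_algebra.
From mathcomp Require Import all_classical all_reals all_analysis.
From mathcomp Require Import ring lra.
Import numFieldNormedType.Exports.
Import Order.TTheory GRing.Theory Num.Theory.
Local Open Scope ring_scope.
Local Open Scope classical_set_scope.

Section QL.
Context {R : realType} {n : nat}.
Implicit Types (a b c y z w : 'rV[R]_n).

Definition N1 a : R := \sum_(i < n) `|a ord0 i|.

Lemma qS (k : R) a : k * q a = \sum_(i < n) k * (a ord0 i) ^+ 2 / 2.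
Proof. by rewrite /q mulrA mulr_sumr mulr_suml. Qed.

Lemma q_ge0 a : 0 <= q a.
Proof. by rewrite /q divr_ge0 // sumr_ge0 // => i _; rewrite sqr_ge0. Qed.

Lemma qN a : q (- a) = q a.
Proof. by rewrite /q; congr (_ / _); apply: eq_bigr => i _; rewrite mxE sqrrN. Qed.

Lemma q_key (r1 r2 : R) y1 y2 z : 0 < r1 -> 0 < r2 ->
  let y := (r1 + r2)^-1 *: (r1 *: y1 + r2 *: y2) in
  r1 * q (y1 - z) + r2 * q (y2 - z) =
  r1 * q (y1 - y) + r2 * q (y2 - y) + (r1 + r2) * q (z - y).
Proof.
move=> h1 h2 y; rewrite !qS -!big_split /=; apply: eq_bigr => i _.
rewrite /y !mxE; have hr : r1 + r2 != 0 by rewrite gt_eqF // addr_gt0.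
by field.
Qed.

Lemma q_convex a b (t : R) : 0 <= t <= 1 ->
  q (t *: a + (1 - t) *: b) <= t * q a + (1 - t) * q b.
Proof.
move=> /andP[t0 t1]; rewrite -[q (_ + _)]mul1r !qS -big_split /=; apply: ler_sum => i _.
rewrite !mxE; set u := a ord0 i; set v := b ord0 i.
have : 0 <= t * (1 - t) * (u - v) ^+ 2 by rewrite mulr_ge0 ?sqr_ge0 // mulr_ge0 // subr_ge0.
nra.
Qed.

Lemma q_lin_bound (K r : R) w : 0 < r -> K * N1 w - r * q w <= n%:R * (K ^+ 2 / (2 * r)).
Proof.
move=> r0; rewrite qS /N1 mulr_sumr -sumrB.
have -> : n%:R * (K ^+ 2 / (2 * r)) = \sum_(i < n) (K ^+ 2 / (2 * r)).
  by rewrite sumr_const card_ord mulr_natl.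
apply: ler_sum => i _; set x := w ord0 i.
have hx : x ^+ 2 = `|x| ^+ 2 by rewrite real_normK // num_real.
have ha : 0 <= `|x| by [].
rewrite hx; rewrite -subr_ge0.
have -> : K ^+ 2 / (2 * r) - (K * `|x| - r * `|x| ^+ 2 / 2) = (r * `|x| - K) ^+ 2 / (2 * r).
  by field; rewrite gt_eqF.
by rewrite divr_ge0 ?sqr_ge0 // mulr_ge0 // ltW.
Qed.

Lemma N1_ge0 a : 0 <= N1 a.
Proof. by rewrite /N1 sumr_ge0. Qed.

Lemma N1D a b : N1 (a + b) <= N1 a + N1 b.
Proof. by rewrite /N1 -big_split /= ler_sum // => i _; rewrite mxE ler_normD. Qed.

Lemma N1N a : N1 (- a) = N1 a.
Proof. by rewrite /N1; apply: eq_bigr => i _; rewrite mxE normrN. Qed.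

Lemma N1Z (t : R) a : N1 (t *: a) = `|t| * N1 a.
Proof. by rewrite /N1 mulr_sumr; apply: eq_bigr => i _; rewrite mxE normrM. Qed.

Lemma coord_le_N1 a i : `|a ord0 i| <= N1 a.
Proof.
rewrite /N1 (bigD1 i) //= lerDl sumr_ge0 //.
Qed.

Lemma q_near w (d : 'rV[R]_n) (eta : R) : 0 < eta <= 1 -> (forall i, `|d ord0 i| < eta) ->
  q (w + d) <= q w + eta * (N1 w + n%:R).
Proof.
move=> /andP[e0 e1] hd.
rewrite -[q (w + d)]mul1r -[q w]mul1r !qS /N1 mulrDr mulr_sumr.
have -> : eta * n%:R = \sum_(i < n) eta by rewrite sumr_const card_ord mulr_natr.
rewrite -!big_split /=; apply: ler_sum => i _; rewrite !mxE.
set a := w ord0 i; set b := d ord0 i.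
have hb := hd i; rewrite -/b in hb.
have h1 : a * b <= `|a| * `|b| by rewrite -normrM real_ler_norm // num_real.
have h2 : `|a| * `|b| <= `|a| * eta by rewrite ler_wpM2l // ltW.
have h3 : b ^+ 2 = `|b| ^+ 2 by rewrite real_normK // num_real.
have h4 : 0 <= `|b| by [].
have h5 : 0 <= `|a| by [].
nra.
Qed.

Lemma g_lb (g : 'rV[R]_n -> \bar R) : Gamma0 g ->
  exists x0 (c K : R), 0 <= K /\ forall y, ((c - K * N1 (y - x0))%:E <= g y)%E.
Proof.
case=> [[gN [x0 gx0]] gc glsc].
case Ex: (g x0) gx0 => [gx| |] // _; last by move: (gN x0); rewrite Ex.
have : ((gx - 1)%:E < g x0)%E by rewrite Ex lte_fin ltrBlDr ltrDl.
move=> /(glsc x0) [V /nbhs_ballP [del /= del0 hball] hV].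
exists x0, (gx - 1), del^-1; split; first by rewrite invr_ge0 ltW.
move=> y; set w := y - x0.
have N0 := N1_ge0 w.
have dN0 : 0 < del + N1 w by rewrite ltr_wpDr.
set t := del / (del + N1 w).
have t0 : 0 < t by rewrite divr_gt0.
have t1 : t <= 1 by rewrite ler_pdivrMr // mul1r lerDl.
set z := t *: y + (1 - t) *: x0.
have zb : ball x0 del z.
  split => // i j; rewrite (ord1 i) -ball_normE /ball_ /= !mxE.
  have -> : x0 ord0 j - (t * y ord0 j + (1 - t) * x0 ord0 j) = - t * w ord0 j.
    by rewrite /w !mxE; ring.
  rewrite normrM normrN (gtr0_norm t0).
  apply: (le_lt_trans (ler_wpM2l (ltW t0) (coord_le_N1 w j))).
  by rewrite /t mulrAC ltr_pdivrMr // ltr_pM2l // ltrDr.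
have hz := hV z (hball z zb).
case Ey: (g y) => [b| |]; [|by rewrite leey|by move: (gN y); rewrite Ey].
have hc0 := gc y x0 b gx t; rewrite Ey Ex in hc0.
have hc := hc0 (lexx _) (lexx _); rewrite (ltW t0) t1 in hc; have {}hc := hc isT.
have := lt_le_trans hz hc; rewrite lte_fin => hlt.
rewrite lee_fin -(ler_pM2l t0).
have ht : t * (1 + del^-1 * N1 w) = 1.
  by rewrite /t; field; rewrite !gt_eqF.
have -> : t * (gx - 1 - del^-1 * N1 w) = t * gx - t * (1 + del^-1 * N1 w) by ring.
rewrite ht; lra.
Qed.

Lemma menv_le (r : R) (g : 'rV[R]_n -> \bar R) x y :
  (menv r g x <= g y + (r * q (y - x))%:E)%E.
Proof. by apply: ereal_inf_lbound; exists y. Qed.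

Lemma menv_lbound (r : R) g : 0 < r -> Gamma0 g -> forall x, exists m : R,
  forall y, (m%:E <= g y + (r * q (y - x))%:E)%E.
Proof.
move=> r0 /g_lb [x0 [c [K [K0 hg]]]] x.
exists (c - K * N1 (x - x0) - n%:R * (K ^+ 2 / (2 * r))) => y.
apply: (@le_trans _ _ ((c - K * N1 (y - x0))%:E + (r * q (y - x))%:E)%E);
  last by apply: leeD.
rewrite -EFinD lee_fin.
have h1 : N1 (y - x0) <= N1 (y - x) + N1 (x - x0).
  have -> : y - x0 = (y - x) + (x - x0) by rewrite addrA subrK.
  exact: N1D.
have h2 : K * N1 (y - x0) <= K * N1 (y - x) + K * N1 (x - x0).
  by rewrite -mulrDr ler_wpM2l.
have h3 := q_lin_bound K r (y - x) r0.
lra.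
Qed.

Definition Ef (r : R) (g : 'rV[R]_n -> \bar R) (x : 'rV[R]_n) : R := fine (menv r g x).

Lemma menv_fin (r : R) g : 0 < r -> Gamma0 g -> forall x, menv r g x = (Ef r g x)%:E.
Proof.
move=> r0 hg x; rewrite /Ef fineK // fin_numElt.
have [m hm] := menv_lbound r g r0 hg x.
have [[gN [x0 gx0]] _ _] := hg.
apply/andP; split.
  apply: (@lt_le_trans _ _ m%:E); first by rewrite ltNyr.
  by apply: le_ereal_inf_tmp => _ [y _ <-]; apply: hm.
apply: (le_lt_trans (menv_le r g x x0)).
have gN0 := gN x0.
case E0: (g x0) gx0 gN0 => [a| |] // _ _.
by rewrite -EFinD ltry.
Qed.

Lemma menv_approx (r : R) g : 0 < r -> Gamma0 g -> forall x (e : R), 0 < e ->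
  exists y (a : R), g y = a%:E /\ a + r * q (y - x) < Ef r g x + e.
Proof.
move=> r0 hg x e e0.
have [[gN _] _ _] := hg.
have : (menv r g x < (Ef r g x + e)%:E)%E by rewrite menv_fin // lte_fin ltrDl.
move/ereal_inf_lt => [_ [y _ <-] hy].
have gNy := gN y.
case Ey: (g y) hy gNy => [a| |] // hy _.
  by exists y, a; split => //; move: hy; rewrite -EFinD lte_fin.
Qed.

Lemma Ef_convex (r : R) g : 0 < r -> Gamma0 g -> forall x y (t : R), 0 <= t <= 1 ->
  Ef r g (t *: x + (1 - t) *: y) <= t * Ef r g x + (1 - t) * Ef r g y.
Proof.
move=> r0 hg x y t ht; have [_ gc _] := hg.
have /andP[t0 t1] := ht.
apply/ler_addgt0Pr => e e0.
have [y1 [a [ga ha]]] := menv_approx r g r0 hg x e e0.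
have [y2 [b [gb hb]]] := menv_approx r g r0 hg y e e0.
have hc0 := gc y1 y2 a b t; rewrite ga gb in hc0.
have hc := hc0 (lexx _) (lexx _) ht.
set xt := t *: x + (1 - t) *: y; set z := t *: y1 + (1 - t) *: y2.
have := menv_le r g xt z; rewrite menv_fin // => h.
have hq : q (z - xt) <= t * q (y1 - x) + (1 - t) * q (y2 - y).
  have -> : z - xt = t *: (y1 - x) + (1 - t) *: (y2 - y).
    by apply/matrixP => i j; rewrite !mxE; ring.
  exact: q_convex.
have := le_trans h (leeD hc (lexx _)); rewrite -EFinD lee_fin => h2.
have hq' := ler_wpM2l (ltW r0) hq.
have h3 := ler_wpM2l t0 (ltW ha).
have h4 : 0 <= 1 - t by rewrite subr_ge0.
have h5 := ler_wpM2l h4 (ltW hb).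
nra.
Qed.

Definition Phi (r1 r2 : R) g h (x : 'rV[R]_n) : R := Ef r1 g x + Ef r2 h x.
Definition Fh (r1 r2 : R) g h (x : 'rV[R]_n) : \bar R :=
  ereal_sup [set (Phi r1 r2 g h (x + v) - (r1 + r2) * q v)%:E | v in [set: 'rV[R]_n]].

Section Main.
Variables (r1 r2 : R) (g h : 'rV[R]_n -> \bar R).
Hypotheses (r10 : 0 < r1) (r20 : 0 < r2) (hg : Gamma0 g) (hh : Gamma0 h).

Let e1E := menv_fin r1 g r10 hg.
Let e2E := menv_fin r2 h r20 hh.

Lemma Fh_lb x v : ((Phi r1 r2 g h (x + v) - (r1 + r2) * q v)%:E <= Fh r1 r2 g h x)%E.
Proof. by apply: ereal_sup_ubound; exists v. Qed.

Lemma Fh_key y1 y2 (a b : R) y : g y1 = a%:E -> h y2 = b%:E ->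
  y = (r1 + r2)^-1 *: (r1 *: y1 + r2 *: y2) ->
  (Fh r1 r2 g h y <= (a + b + (r1 * q (y1 - y) + r2 * q (y2 - y)))%:E)%E.
Proof.
move=> ga hb ye; apply: ge_ereal_sup => _ [v _ <-]; rewrite lee_fin.
have h1 := menv_le r1 g (y + v) y1; rewrite e1E ga -EFinD lee_fin in h1.
have h2 := menv_le r2 h (y + v) y2; rewrite e2E hb -EFinD lee_fin in h2.
have k := q_key r1 r2 y1 y2 (y + v) r10 r20; rewrite /= -ye in k.
have ev : y + v - y = v by rewrite addrC addKr.
rewrite ev in k.
rewrite /Phi; lra.
Qed.

Lemma Fh_convex : convex_efun (Fh r1 r2 g h).
Proof.
move=> x y a b t hx hy ht; have /andP[t0 t1] := ht.
apply: ge_ereal_sup => _ [v _ <-]; rewrite lee_fin.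
have hxv : Phi r1 r2 g h (x + v) - (r1 + r2) * q v <= a.
  by rewrite -lee_fin; apply: le_trans hx; apply: Fh_lb.
have hyv : Phi r1 r2 g h (y + v) - (r1 + r2) * q v <= b.
  by rewrite -lee_fin; apply: le_trans hy; apply: Fh_lb.
have -> : t *: x + (1 - t) *: y + v = t *: (x + v) + (1 - t) *: (y + v).
  by apply/matrixP => i j; rewrite !mxE; ring.
have c1 := Ef_convex r1 g r10 hg (x + v) (y + v) t ht.
have c2 := Ef_convex r2 h r20 hh (x + v) (y + v) t ht.
have h3 := ler_wpM2l t0 hxv.
have h4 : 0 <= 1 - t by rewrite subr_ge0.
have h5 := ler_wpM2l h4 hyv.
move: h3 h5; rewrite /Phi => h3 h5.
nra.
Qed.

Lemma Fh_proper : proper_fun (Fh r1 r2 g h).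
Proof.
split.
  move=> x; have hl := Fh_lb x 0.
  by rewrite gt_eqF // (lt_le_trans _ hl) // ltNyr.
have [[gN [y1 gy1]] _ _] := hg; have [[hN [y2 hy2]] _ _] := hh.
have gN1 := gN y1; have hN2 := hN y2.
case Eg: (g y1) gy1 gN1 => [a| |] // _ _.
case Eh: (h y2) hy2 hN2 => [b| |] // _ _.
have k := @Fh_key _ _ _ _ _ Eg Eh erefl.
exists ((r1 + r2)^-1 *: (r1 *: y1 + r2 *: y2)); by rewrite lt_eqF // (le_lt_trans k) // ltry.
Qed.


Lemma Fh_lsc : lower_semicontinuous (Fh r1 r2 g h).
Proof.
move=> x a /ereal_sup_gt [_ [v _ <-]]; rewrite lte_fin => hv.
set P := Phi r1 r2 g h (x + v).
set s := P - (r1 + r2) * q v - a.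
have s0 : 0 < s by rewrite /s subr_gt0.
set M := N1 v + n%:R + 1.
have M0 : 0 < M by rewrite /M ltr_wpDl // addr_ge0 // N1_ge0.
have rM0 : 0 < (r1 + r2) * M by rewrite mulr_gt0 // addr_gt0.
set eta := s / ((r1 + r2) * M + s).
have D0 : 0 < (r1 + r2) * M + s by rewrite addr_gt0.
have eta0 : 0 < eta by rewrite divr_gt0.
have eta1 : eta <= 1 by rewrite ler_pdivrMr // mul1r lerDr ltW.
have heta : eta * ((r1 + r2) * M + s) = s by rewrite /eta divfK // gt_eqF.
exists (ball x eta); first exact: nbhsx_ballx.
move=> y hy.
apply: (lt_le_trans _ (Fh_lb y (v + (x - y)))); rewrite lte_fin.
have -> : y + (v + (x - y)) = x + v by apply/matrixP => i j; rewrite !mxE; ring.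
have hq : q (v + (x - y)) <= q v + eta * (N1 v + n%:R).
  apply: q_near; first by rewrite eta0 eta1.
  move=> i; case: hy => _ /(_ ord0 i); rewrite -ball_normE /ball_ /= !mxE.
  by [].
have hq' := ler_wpM2l (ltW (addr_gt0 r10 r20)) hq.
have es0 : 0 < eta * s by rewrite mulr_gt0.
have hNv := N1_ge0 v.
have key : (r1 + r2) * (eta * (N1 v + n%:R)) < s.
  have -> : (r1 + r2) * (eta * (N1 v + n%:R)) = s - eta * s - (r1 + r2) * eta.
    by rewrite -{1}heta /M; ring.
  have : 0 < (r1 + r2) * eta by rewrite mulr_gt0 // addr_gt0.
  lra.
have hs : s = P - (r1 + r2) * q v - a by [].
rewrite -/P; rewrite mulrDr in hq'.
lra.
Qed.

Lemma Fh_env x : (menv r1 g x + menv r2 h x)%E = menv (r1 + r2) (Fh r1 r2 g h) x.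
Proof.
rewrite e1E e2E -EFinD; apply/eqP; rewrite eq_le; apply/andP; split.
  apply: le_ereal_inf_tmp => _ [y _ <-].
  have hl := Fh_lb y (x - y).
  rewrite [y + (x - y)]addrC subrK in hl.
  apply: le_trans (leeD hl (lexx _)); rewrite -EFinD lee_fin.
  have -> : q (y - x) = q (x - y) by rewrite -opprB qN.
  rewrite /Phi; lra.
apply/lee_addgt0Pr => e e0.
have e20 : 0 < e / 2 by rewrite divr_gt0.
have [y1 [a [ga ha]]] := menv_approx r1 g r10 hg x (e / 2) e20.
have [y2 [b [gb hb]]] := menv_approx r2 h r20 hh x (e / 2) e20.
set y := (r1 + r2)^-1 *: (r1 *: y1 + r2 *: y2).
apply: le_trans (menv_le (r1 + r2) (Fh r1 r2 g h) x y) _.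
apply: le_trans (leeD (@Fh_key _ _ _ _ y ga gb erefl) (lexx _)) _.
rewrite -!EFinD lee_fin.
have k := q_key r1 r2 y1 y2 x r10 r20; rewrite /= -/y in k.
have -> : q (y - x) = q (x - y) by rewrite -opprB qN.
rewrite /Phi; lra.
Qed.

End Main.
End QL.

Theorem corollary4p41 (R : realType) (n : nat) (r1 r2 : R)
    (g h : 'rV[R]_n -> \bar R) :
  0 < r1 -> 0 < r2 -> Gamma0 g -> Gamma0 h ->
  exists f : 'rV[R]_n -> \bar R,
    [/\ Gamma0 f,
        (forall x, (menv r1 g x + menv r2 h x)%E = menv (r1 + r2) f x) &
        (forall x, f x = ereal_sup
           [set ((menv r1 g (x + v) - (r1 * q v)%:E) +
                 (menv r2 h (x + v) - (r2 * q v)%:E))%E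
           | v in [set: 'rV[R]_n]])].
Proof.
move=> r10 r20 hg hh.
exists (Fh r1 r2 g h); split.
- split; [by apply: Fh_proper | by apply: Fh_convex | by apply: Fh_lsc].
- by move=> x; apply: Fh_env.
- move=> x; rewrite /Fh; congr (ereal_sup _); apply: eq_imagel => v _.
  rewrite (menv_fin r1 g r10 hg) (menv_fin r2 h r20 hh) -!EFinB -EFinD /Phi.
  by congr (_%:E); ring.
Qed.
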